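(* Let $0<\alpha<1$, $h>0$, $x_0\in\mathbb{R}$, and let $G:\mathbb{R}\to\mathbb{R}$ be continuous. Let $U:\{1,2,3,\dots\}\to\mathbb{R}$ be either $U(n)=n^{\alpha-1}$ (the fractional case) or $U(n)=\dfrac{\Gamma(n+\alpha-1)}{\Gamma(n)}$ (the fractional difference case). Let $(x_n)_{n\ge 0}$ be a real sequence satisfying $$x_{n+1}=x_0-\frac{h^{\alpha}}{\Gamma(\alpha)}\sum_{k=0}^{n}G(x_k)\,U(n-k+1),\qquad n\ge 0.$$ Let $W_\alpha=\sum_{n=1}^{\infty}\bigl[U(2n-1)-U(2n)\bigr]$ (a convergent series). Suppose that the limits $x_o=\lim_{n\to\infty}x_{2n+1}$ and $x_e=\lim_{n\to\infty}x_{2n}$ exist in $\mathbb{R}$ (an asymptotic period-two sink). Then $$G(x_o)+G(x_e)=0,\qquad x_o-x_e=\frac{W_\alpha}{\Gamma(\alpha)}\,h^{\alpha}\bigl[G(x_o)-G(x_e)\bigr].$$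
   Context: The recursion is the common form, for $0<\alpha<1$, of the Riemann–Liouville and Caputo universal fractional maps (kernel $U(n)=n^{\alpha-1}$) and of the Caputo $h$-difference universal map (kernel $U(n)=\Gamma(n+\alpha-1)/\Gamma(n)$, the falling factorial $(n+\alpha-2)^{(\alpha-1)}$); here $G=G_K$ is the nonlinearity of the map. Note $U(1)=1$ in the first case and $U(1)=\Gamma(\alpha)$ in the second. *)

(* Defs.v *)
From Stdlib Require Import Reals.
From Coquelicot Require Import Coquelicot.
Open Scope R_scope.

(* Euler's Gamma function, defined (for x > 0) by the improper integral
   Gamma(x) = \int_0^{+oo} t^(x-1) e^(-t) dt.
   Only positive arguments are used in the statement. *)
Definition Gamma (x : R) : R :=
  RInt_gen (fun t => Rpower t (x - 1) * exp (- t))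
           (at_right 0) (Rbar_locally p_infty).

Definition U_frac (alpha : R) (n : nat) : R := Rpower (INR n) (alpha - 1).
Definition U_diff (alpha : R) (n : nat) : R :=
  Gamma (INR n + alpha - 1) / Gamma (INR n).

(* W_alpha = sum_{n>=1} [U(2n-1) - U(2n)], reindexed from m = n-1 >= 0. *)
Definition W_alpha (U : nat -> R) : R :=
  Series (fun m => U (2 * m + 1)%nat - U (2 * m + 2)%nat).

(* Main.v *)
Require Import Defs.
From Stdlib Require Import Reals Lra Lia Psatz.
From Coquelicot Require Import Coquelicot.
Open Scope R_scope.

Definition conv (z w : nat -> R) (m : nat) : R :=
  sum_f_R0 (fun i => z i * w (m - i)%nat) m.

Lemma sum_pair (f : nat -> R) (m : nat) :
  sum_f_R0 f (2 * m + 1) = sum_f_R0 (fun i => f (2 * i)%nat + f (2 * i + 1)%nat) m.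
Proof.
  induction m as [|m IH].
  - simpl. reflexivity.
  - replace (2 * S m + 1)%nat with (S (S (2 * m + 1))) by lia.
    rewrite tech5, tech5, IH, tech5.
    replace (2 * S m)%nat with (S (2 * m + 1)) by lia.
    replace (S (2 * m + 1) + 1)%nat with (S (S (2 * m + 1))) by lia.
    ring.
Qed.

Lemma sum_rev (f : nat -> R) (m : nat) :
  sum_f_R0 (fun i => f (m - i)%nat) m = sum_f_R0 f m.
Proof.
  revert f; induction m as [|m IH]; intro f.
  - simpl. reflexivity.
  - rewrite decomp_sum by lia. simpl pred.
    rewrite tech5.
    replace (S m - 0)%nat with (S m) by lia.
    rewrite <- (IH f).
    rewrite (sum_eq (fun i => f (S m - S i)%nat) (fun i => f (m - i)%nat)).
    + ring.
    + intros i Hi. f_equal.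
Qed.

Lemma conv_pair (y v : nat -> R) (m : nat) :
  sum_f_R0 (fun k => y k * v (2 * m + 1 - k)%nat) (2 * m + 1) =
  conv (fun i => y (2 * i)%nat) (fun j => v (2 * j + 1)%nat) m +
  conv (fun i => y (2 * i + 1)%nat) (fun j => v (2 * j)%nat) m.
Proof.
  rewrite sum_pair. unfold conv. rewrite <- plus_sum.
  apply sum_eq. intros i Hi.
  replace (2 * m + 1 - 2 * i)%nat with (2 * (m - i) + 1)%nat by lia.
  replace (2 * m + 1 - (2 * i + 1))%nat with (2 * (m - i))%nat by lia.
  reflexivity.
Qed.

Lemma conv_minus_w (z w1 w2 : nat -> R) m :
  conv z w1 m - conv z w2 m = conv z (fun j => w1 j - w2 j) m.
Proof. unfold conv. rewrite <- minus_sum. apply sum_eq. intros; ring. Qed.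

Lemma conv_plus_w (z w1 w2 : nat -> R) m :
  conv z w1 m + conv z w2 m = conv z (fun j => w1 j + w2 j) m.
Proof. unfold conv. rewrite <- plus_sum. apply sum_eq. intros; ring. Qed.

Lemma conv_plus_z (z1 z2 w : nat -> R) m :
  conv z1 w m + conv z2 w m = conv (fun i => z1 i + z2 i) w m.
Proof. unfold conv. rewrite <- plus_sum. apply sum_eq. intros; ring. Qed.

Lemma conv_last (z w w' : nat -> R) (c : R) m :
  w' O = w O - c -> (forall j, (1 <= j)%nat -> w' j = w j) ->
  conv z w' m = conv z w m - z m * c.
Proof.
  intros H0 H1. unfold conv. destruct m as [|m].
  - simpl. rewrite H0. ring.
  - rewrite !tech5. replace (S m - S m)%nat with O by lia. rewrite H0.
    rewrite (sum_eq (fun i => z i * w' (S m - i)%nat) (fun i => z i * w (S m - i)%nat)). ring.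
    intros i Hi. rewrite H1 by lia. reflexivity.
Qed.

Lemma conv_const_z (L : R) (e w : nat -> R) m :
  conv (fun i => L + e i) w m = L * sum_f_R0 w m + conv e w m.
Proof.
  unfold conv. rewrite <- (sum_rev w m), scal_sum, <- plus_sum.
  apply sum_eq. intros; ring.
Qed.

Lemma fin_bound (f : nat -> R) (N : nat) :
  exists B, 0 <= B /\ forall i, (i <= N)%nat -> Rabs (f i) <= B.
Proof.
  induction N as [|N [B [HB H]]].
  - exists (Rabs (f O)). split. apply Rabs_pos. intros i Hi.
    replace i with O by lia. lra.
  - exists (Rmax B (Rabs (f (S N)))). split.
    + eapply Rle_trans; [apply HB| apply Rmax_l].
    + intros i Hi. destruct (Nat.eq_dec i (S N)) as [->|Hne].
      * apply Rmax_r.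
      * eapply Rle_trans; [apply H; lia| apply Rmax_l].
Qed.

Lemma sum_step_const (K : R) (N m : nat) :
  sum_f_R0 (fun i => if Nat.leb i N then K else 0) m = K * INR (S (Nat.min m N)).
Proof.
  induction m as [|m IH].
  - simpl. replace (Nat.leb 0 N) with true by (symmetry; apply Nat.leb_le; lia). simpl. ring.
  - rewrite tech5, IH. destruct (Nat.leb (S m) N) eqn:E.
    + apply Nat.leb_le in E. replace (Nat.min m N) with m by lia.
      replace (Nat.min (S m) N) with (S m) by lia. rewrite (S_INR (S m)). ring.
    + apply Nat.leb_gt in E. replace (Nat.min m N) with N by lia.
      replace (Nat.min (S m) N) with N by lia. ring.
Qed.

Lemma conv_bound (e w : nat -> R) (m N : nat) (eps K : R) :
  (forall j, 0 <= w j) -> 0 <= K ->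
  (forall i, (N < i)%nat -> Rabs (e i) <= eps) ->
  (forall i, (i <= N)%nat -> Rabs (e i) * w (m - i)%nat <= K) ->
  Rabs (conv e w m) <= K * INR (S N) + eps * sum_f_R0 w m.
Proof.
  intros Hw HK He HeK. unfold conv.
  eapply Rle_trans. apply sum_f_R0_triangle.
  eapply Rle_trans.
  apply (sum_Rle _ (fun i => (if Nat.leb i N then K else 0) + eps * w (m - i)%nat)).
  - intros i Hi. rewrite Rabs_mult, (Rabs_pos_eq (w _)) by apply Hw.
    destruct (Nat.leb i N) eqn:E.
    + apply Nat.leb_le in E. specialize (HeK i E).
      assert (0 <= eps * w (m - i)%nat).
      { apply Rmult_le_pos; [| apply Hw]. 
        specialize (He (S N) ltac:(lia)). pose proof (Rabs_pos (e (S N))). lra. }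
      lra.
    + apply Nat.leb_gt in E. specialize (He i E).
      apply Rplus_le_compat_l with (r := 0) in He. 
      pose proof (Hw (m - i)%nat).
      rewrite Rplus_0_l. apply Rmult_le_compat_r; lra.
  - rewrite plus_sum, sum_step_const.
    rewrite <- (sum_rev w m), scal_sum.
    apply Rplus_le_compat.
    + apply Rmult_le_compat_l; [lra|]. apply le_INR. lia.
    + right. apply sum_eq. intros; ring.
Qed.

Lemma partial_le_lim (w : nat -> R) (Wt : R) :
  (forall j, 0 <= w j) -> is_lim_seq (sum_f_R0 w) Wt -> forall m, sum_f_R0 w m <= Wt.
Proof.
  intros Hw HW m. apply (is_lim_seq_incr_compare _ _ HW).
  intro n. rewrite tech5. specialize (Hw (S n)). lra.
Qed.

Lemma series_term_0 (w : nat -> R) (Wt : R) :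
  is_lim_seq (sum_f_R0 w) Wt -> is_lim_seq w 0.
Proof.
  intro HW. apply is_lim_seq_incr_1.
  apply is_lim_seq_ext with (fun n => sum_f_R0 w (S n) - sum_f_R0 w n).
  - intro n. rewrite tech5. ring.
  - replace (Finite 0) with (Rbar_minus Wt Wt) by (simpl; f_equal; ring).
    apply is_lim_seq_minus'. apply (is_lim_seq_incr_1 (sum_f_R0 w)). exact HW. exact HW.
Qed.

Lemma toeplitz0 (e w : nat -> R) (Wt : R) :
  is_lim_seq e 0 -> (forall j, 0 <= w j) -> is_lim_seq (sum_f_R0 w) Wt ->
  is_lim_seq (conv e w) 0.
Proof.
  intros He Hw HW.
  pose proof (partial_le_lim w Wt Hw HW) as Hle.
  assert (HWt : 0 <= Wt) by (specialize (Hle O); simpl in Hle; specialize (Hw O); lra).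
  pose proof (series_term_0 w Wt HW) as Hw0.
  apply is_lim_seq_Reals in He. apply is_lim_seq_Reals in Hw0.
  apply is_lim_seq_Reals. intros eps Heps.
  set (eta := eps / (2 * (Wt + 1))).
  assert (Heta : 0 < eta) by (unfold eta; apply Rdiv_lt_0_compat; lra).
  destruct (He eta Heta) as [N HN].
  destruct (fin_bound e N) as [B [HB0 HB]].
  set (delta := eps / (2 * (B + 1) * INR (S N))).
  assert (HSN : 0 < INR (S N)) by (apply lt_0_INR; lia).
  assert (Hdelta : 0 < delta) by (unfold delta; apply Rdiv_lt_0_compat; [lra| apply Rmult_lt_0_compat; lra]).
  destruct (Hw0 delta Hdelta) as [J HJ].
  exists (N + J)%nat. intros m Hm.
  unfold R_dist. rewrite Rminus_0_r.
  eapply Rle_lt_trans.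
  apply (conv_bound e w m N eta (B * delta)); auto.
  - apply Rmult_le_pos; lra.
  - intros i Hi. specialize (HN i ltac:(lia)). unfold R_dist in HN.
    rewrite Rminus_0_r in HN. lra.
  - intros i Hi. specialize (HJ (m - i)%nat ltac:(lia)). unfold R_dist in HJ.
    rewrite Rminus_0_r in HJ. specialize (HB i Hi). pose proof (Hw (m - i)%nat).
    pose proof (Rabs_pos (e i)).
    apply Rmult_le_compat; try lra. 
    rewrite Rabs_pos_eq in HJ by lra. lra.
  - specialize (Hle m).
    assert (E1 : B * delta * INR (S N) = eps / 2 * (B / (B + 1))) by (unfold delta; field; lra).
    assert (E2 : B / (B + 1) < 1) by (apply Rmult_lt_reg_r with (B + 1); [lra|]; unfold Rdiv; rewrite Rmult_assoc, Rinv_l; lra).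
    assert (E3 : eta * sum_f_R0 w m <= eta * Wt) by (apply Rmult_le_compat_l; lra).
    assert (E4 : eta * Wt = eps / 2 * (Wt / (Wt + 1))) by (unfold eta; field; lra).
    assert (E5 : Wt / (Wt + 1) < 1) by (apply Rmult_lt_reg_r with (Wt + 1); [lra|]; unfold Rdiv; rewrite Rmult_assoc, Rinv_l; lra).
    assert (eps / 2 * (B / (B + 1)) < eps / 2) by (rewrite <- (Rmult_1_r (eps/2)) at 2; apply Rmult_lt_compat_l; lra).
    assert (eps / 2 * (Wt / (Wt + 1)) < eps / 2) by (rewrite <- (Rmult_1_r (eps/2)) at 2; apply Rmult_lt_compat_l; lra).
    lra.
Qed.

Lemma toeplitz (z w : nat -> R) (L Wt : R) :
  is_lim_seq z L -> (forall j, 0 <= w j) -> is_lim_seq (sum_f_R0 w) Wt ->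
  is_lim_seq (conv z w) (L * Wt).
Proof.
  intros Hz Hw HW.
  apply is_lim_seq_ext with (fun m => L * sum_f_R0 w m + conv (fun i => z i - L) w m).
  - intro m. rewrite <- conv_const_z. unfold conv. apply sum_eq. intros; f_equal; ring.
  - replace (Finite (L * Wt)) with (Rbar_plus (L * Wt) 0) by (simpl; f_equal; ring).
    apply is_lim_seq_plus'.
    + pose proof (is_lim_seq_scal_l _ L _ HW) as H. simpl in H. exact H.
    + apply (toeplitz0 _ w Wt); auto.
      replace (Finite 0) with (Rbar_minus L L) by (simpl; f_equal; ring).
      apply is_lim_seq_minus'. exact Hz. apply is_lim_seq_const.
Qed.

Lemma ln_le' x y : 0 < x -> x <= y -> ln x <= ln y.
Proof. intros Hx [H|H]. left; apply ln_increasing; lra. subst; lra. Qed.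

Lemma exp_le' x y : x <= y -> exp x <= exp y.
Proof. intros [H|H]. left; apply exp_increasing; lra. subst; lra. Qed.

Lemma ln_1p_le x : -1 < x -> ln (1 + x) <= x.
Proof.
  intro Hx. rewrite <- (ln_exp x) at 2. apply ln_le'. lra. apply exp_ineq1_le.
Qed.

Lemma ln_ge0 x : 1 <= x -> 0 <= ln x.
Proof. intro H. rewrite <- ln_1. apply ln_le'; lra. Qed.

Lemma harmonic_ln m : ln (INR m + 2) <= sum_f_R0 (fun j => / (INR j + 1)) m.
Proof.
  induction m as [|m IH].
  - simpl. replace (0 + 2) with (1 + 1) by ring. replace (/ (0 + 1)) with 1 by field.
    apply ln_1p_le. lra.
  - rewrite tech5, S_INR.
    pose proof (pos_INR m).
    replace (INR m + 1 + 2) with ((INR m + 2) * (1 + / (INR m + 1 + 1))) by (field; lra).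
    assert (0 < / (INR m + 1 + 1)) by (apply Rinv_0_lt_compat; lra).
    rewrite ln_mult by lra.
    pose proof (ln_1p_le (/ (INR m + 1 + 1)) ltac:(assert (0 < / (INR m + 1 + 1)) by (apply Rinv_0_lt_compat; lra); lra)).
    lra.
Qed.

Lemma div_contra (sq w : nat -> R) (s Bd Wmax : R) (M0 : nat) :
  is_lim_seq sq s -> (forall j, 0 <= w j <= Wmax) ->
  (forall T, exists m, (M0 <= m)%nat /\ T < sum_f_R0 w m) ->
  (forall m, (M0 <= m)%nat -> Rabs (conv sq w m) <= Bd) -> s = 0.
Proof.
  intros Hs Hw Hunb Hbd.
  destruct (Req_dec s 0) as [|Hne]; [assumption| exfalso].
  assert (Has : 0 < Rabs s) by (apply Rabs_pos_lt; exact Hne).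
  assert (He : is_lim_seq (fun i => sq i - s) 0).
  { replace (Finite 0) with (Rbar_minus s s) by (simpl; f_equal; ring).
    apply is_lim_seq_minus'. exact Hs. apply is_lim_seq_const. }
  apply is_lim_seq_Reals in He.
  destruct (He (Rabs s / 2) ltac:(lra)) as [N HN].
  destruct (fin_bound (fun i => sq i - s) N) as [B [HB0 HB]].
  assert (HWm : 0 <= Wmax) by (destruct (Hw O); lra).
  set (K := B * Wmax).
  destruct (Hunb (2 * (Bd + K * INR (S N)) / Rabs s)) as [m [Hm HT]].
  specialize (Hbd m Hm).
  assert (Hc : conv sq w m = s * sum_f_R0 w m + conv (fun i => sq i - s) w m).
  { rewrite <- conv_const_z. unfold conv. apply sum_eq. intros; f_equal; ring. }
  assert (Hb2 := conv_bound (fun i => sq i - s) w m N (Rabs s / 2) K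
     ltac:(intro j; destruct (Hw j); lra) ltac:(unfold K; apply Rmult_le_pos; lra)
     ltac:(intros i Hi; specialize (HN i ltac:(lia)); unfold R_dist in HN; rewrite Rminus_0_r in HN; lra)
     ltac:(intros i Hi; unfold K; apply Rmult_le_compat; [apply Rabs_pos| destruct (Hw (m-i)%nat); lra | apply HB; lia| destruct (Hw (m-i)%nat); lra])).
  assert (Hsum0 : 0 <= sum_f_R0 w m) by (apply cond_pos_sum; intro j; destruct (Hw j); lra).
  rewrite Hc in Hbd.
  assert (Rabs (s * sum_f_R0 w m) = Rabs s * sum_f_R0 w m) by (rewrite Rabs_mult, (Rabs_pos_eq (sum_f_R0 w m)); lra).
  set (C := conv (fun i => sq i - s) w m) in *.
  assert (H0 : Rabs (s * sum_f_R0 w m) <= Rabs (s * sum_f_R0 w m + C) + Rabs C).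
  { replace (s * sum_f_R0 w m) with ((s * sum_f_R0 w m + C) + - C) at 1 by ring.
    rewrite <- (Rabs_Ropp C). apply Rabs_triang. }
  assert (HT2 : 2 * (Bd + K * INR (S N)) < Rabs s * sum_f_R0 w m).
  { apply Rmult_lt_compat_l with (r := Rabs s) in HT; [|lra].
    unfold Rdiv in HT. rewrite <- Rmult_assoc, (Rmult_comm (Rabs s)), Rmult_assoc, Rinv_r, Rmult_1_r in HT; lra. }
  lra.
Qed.

Lemma lim_scal (u : nat -> R) (a l : R) : is_lim_seq u l -> is_lim_seq (fun n => a * u n) (a * l).
Proof. intro H. pose proof (is_lim_seq_scal_l u a l H) as H'. simpl in H'. exact H'. Qed.

Lemma U_le_U1 (U : nat -> R) :
  (forall n, (1 <= n)%nat -> U (S n) <= U n) -> forall n, (1 <= n)%nat -> U n <= U 1%nat.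
Proof.
  intros HU n Hn. induction n as [|n IH]; [lia|].
  destruct (Nat.eq_dec n 0) as [->|Hne]; [lra|].
  specialize (IH ltac:(lia)). specialize (HU n ltac:(lia)). lra.
Qed.

Lemma abstract_main (c : R) (U : nat -> R) (G : R -> R) (x : nat -> R) (xo xe kap : R) :
  (forall y, continuous G y) ->
  (forall n, (1 <= n)%nat -> 0 <= U n) ->
  (forall n, (1 <= n)%nat -> U (S n) <= U n) ->
  is_lim_seq U 0 ->
  0 < kap -> (forall n, (1 <= n)%nat -> kap / INR n <= U n) ->
  (forall n, x (S n) = x 0%nat - c * sum_f_R0 (fun k => G (x k) * U (n - k + 1)%nat) n) ->
  is_lim_seq (fun n => x (2 * n + 1)%nat) xo -> is_lim_seq (fun n => x (2 * n)%nat) xe ->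
  (c <> 0 -> G xo + G xe = 0) /\
  xo - xe = c * Series (fun m => U (2 * m + 1)%nat - U (2 * m + 2)%nat) * (G xo - G xe).
Proof.
  intros HG HU0 HUd HU0lim Hkap HUk Hx Hxo Hxe.
  set (y := fun k => G (x k)).
  set (S := fun n => sum_f_R0 (fun k => y k * U (n - k + 1)%nat) n).
  assert (Hx' : forall n, x (Datatypes.S n) = x 0%nat - c * S n) by (intro n; apply Hx).
  set (ye := fun i => y (2 * i)%nat).
  set (yo := fun i => y (2 * i + 1)%nat).
  assert (Hye : is_lim_seq ye (G xe)).
  { apply (filterlim_comp _ _ _ (fun n => x (2 * n)%nat) G eventually (locally xe)).
    exact Hxe. apply HG. }
  assert (Hyo : is_lim_seq yo (G xo)).
  { apply (filterlim_comp _ _ _ (fun n => x (2 * n + 1)%nat) G eventually (locally xo)).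
    exact Hxo. apply HG. }
  set (wo := fun j => U (2 * j + 1)%nat - U (2 * j + 2)%nat).
  set (we := fun j => if Nat.eqb j 0 then 0 else U (2 * j)%nat - U (2 * j + 1)%nat).
  set (uo := fun j => U (2 * j + 1)%nat).
  assert (Hwo : forall j, 0 <= wo j).
  { intro j. unfold wo. replace (2 * j + 2)%nat with (Datatypes.S (2 * j + 1)) by lia.
    specialize (HUd (2 * j + 1)%nat ltac:(lia)). lra. }
  assert (Hwe : forall j, 0 <= we j).
  { intro j. unfold we. destruct (Nat.eqb j 0) eqn:E; [lra|].
    apply Nat.eqb_neq in E. replace (2 * j + 1)%nat with (Datatypes.S (2 * j)) by lia.
    specialize (HUd (2 * j)%nat ltac:(lia)). lra. }
  assert (Hsum : forall m, sum_f_R0 wo m + sum_f_R0 we m = U 1%nat - U (2 * m + 2)%nat).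
  { induction m as [|m IH].
    - simpl. unfold wo, we. simpl. ring.
    - rewrite !tech5.
      change (wo (Datatypes.S m)) with (U (2 * Datatypes.S m + 1)%nat - U (2 * Datatypes.S m + 2)%nat).
      change (we (Datatypes.S m)) with (U (2 * Datatypes.S m)%nat - U (2 * Datatypes.S m + 1)%nat).
      replace (2 * Datatypes.S m)%nat with (2 * m + 2)%nat by lia.
      replace (2 * Datatypes.S m + 1)%nat with (2 * m + 2 + 1)%nat by lia.
      replace (2 * Datatypes.S m + 2)%nat with (2 * m + 2 + 1 + 1)%nat by lia.
      replace (2 * (m + 1) + 1)%nat with (2 * m + 2 + 1)%nat by lia.
      lra. }
  assert (Hex : ex_finite_lim_seq (sum_f_R0 wo)).
  { apply (ex_finite_lim_seq_incr _ (U 1%nat)).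
    - intro n. rewrite tech5. specialize (Hwo (Datatypes.S n)). lra.
    - intro n. specialize (Hsum n). pose proof (cond_pos_sum we n Hwe).
      specialize (HU0 (2 * n + 2)%nat ltac:(lia)). lra. }
  destruct Hex as [Wl HWl].
  assert (HSer : Series wo = Wl).
  { apply is_series_unique. 
    apply (is_lim_seq_ext (sum_f_R0 wo) (sum_n wo)) in HWl.
    exact HWl. intro n. symmetry. apply sum_n_Reals. }
  change (Series (fun m => U (2 * m + 1)%nat - U (2 * m + 2)%nat)) with (Series wo).
  rewrite HSer.
  assert (HU2 : is_lim_seq (fun m => U (2 * m + 2)%nat) 0).
  { apply (is_lim_seq_subseq U 0 (fun m => (2 * m + 2)%nat)); [|exact HU0lim].
    apply eventually_subseq. intro n; lia. }
  assert (HWe : is_lim_seq (sum_f_R0 we) (U 1%nat - 0 - Wl)).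
  { apply is_lim_seq_ext with (fun m => U 1%nat - U (2 * m + 2)%nat - sum_f_R0 wo m).
    intro m. specialize (Hsum m). lra.
    apply is_lim_seq_minus'; [apply is_lim_seq_minus'; [apply is_lim_seq_const| exact HU2]| exact HWl]. }
  assert (HSodd : forall m, S (2 * m + 1)%nat =
     conv ye (fun j => U (2 * j + 1 + 1)%nat) m + conv yo uo m).
  { intro m. exact (conv_pair y (fun n => U (n + 1)%nat) m). }
  set (z := fun n => if Nat.eqb n 0 then 0 else U n).
  assert (HSeven : forall m, S (2 * m)%nat = conv ye uo m + conv yo (fun j => z (2 * j)%nat) m).
  { intro m.
    transitivity (sum_f_R0 (fun k => y k * z (2 * m + 1 - k)%nat) (2 * m + 1)).
    - replace (2 * m + 1)%nat with (Datatypes.S (2 * m)) by lia.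
      rewrite tech5. replace (Datatypes.S (2 * m) - Datatypes.S (2 * m))%nat with O by lia.
      unfold z at 2. simpl Nat.eqb. cbv iota. rewrite Rmult_0_r, Rplus_0_r.
      unfold S. apply sum_eq. intros i Hi. unfold z.
      replace (Datatypes.S (2 * m) - i)%nat with (2 * m - i + 1)%nat by lia.
      replace (Nat.eqb (2 * m - i + 1) 0) with false by (symmetry; apply Nat.eqb_neq; lia).
      reflexivity.
    - rewrite (conv_pair y z m). f_equal. unfold conv. apply sum_eq. intros i Hi.
      unfold z, uo. replace (Nat.eqb (2 * (m - i) + 1) 0) with false by (symmetry; apply Nat.eqb_neq; lia).
      reflexivity. }
  assert (HD : forall m, S (2 * m)%nat - S (2 * m + 1)%nat =
      conv ye wo m + (conv yo we m - yo m * U 1%nat)).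
  { intro m. rewrite HSodd, HSeven.
    replace (conv ye uo m + conv yo (fun j => z (2 * j)%nat) m -
      (conv ye (fun j => U (2 * j + 1 + 1)%nat) m + conv yo uo m)) with
      ((conv ye uo m - conv ye (fun j => U (2 * j + 1 + 1)%nat) m) +
       (conv yo (fun j => z (2 * j)%nat) m - conv yo uo m)) by ring.
    rewrite !conv_minus_w. f_equal.
    - unfold conv. apply sum_eq. intros i Hi. unfold uo, wo.
      replace (2 * (m - i) + 1 + 1)%nat with (2 * (m - i) + 2)%nat by lia. reflexivity.
    - apply conv_last.
      + unfold z, uo, we. simpl. ring.
      + intros j Hj. unfold z, uo, we.
        replace (Nat.eqb (2 * j) 0) with false by (symmetry; apply Nat.eqb_neq; lia).
        replace (Nat.eqb j 0) with false by (symmetry; apply Nat.eqb_neq; lia).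
        reflexivity. }
  split.
  -
    intro Hc.
    set (P := fun m => conv (fun i => ye i + yo i) uo m).
    assert (HP : forall m, P m = S (2 * m + 1)%nat + conv ye wo m).
    { intro m. unfold P. rewrite <- conv_plus_z, HSodd.
      replace (conv ye uo m) with (conv ye (fun j => U (2 * j + 1 + 1)%nat) m + conv ye wo m).
      ring. rewrite conv_plus_w. unfold conv. apply sum_eq. intros i Hi. unfold wo, uo.
      replace (2 * (m - i) + 1 + 1)%nat with (2 * (m - i) + 2)%nat by lia. ring. }
    assert (HxS : is_lim_seq (fun m => x (Datatypes.S (2 * m + 1))) xe).
    { apply is_lim_seq_incr_1 in Hxe. eapply is_lim_seq_ext; [|exact Hxe].
      intro n. simpl. f_equal. lia. }
    assert (HPl : is_lim_seq P ((x 0%nat - xe) / c + G xe * Wl)).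
    { eapply is_lim_seq_ext. intro m. symmetry. apply HP.
      apply is_lim_seq_plus'.
      - apply is_lim_seq_ext with (fun m => (x 0%nat - x (Datatypes.S (2 * m + 1))) * / c).
        intro m. rewrite Hx'. field. exact Hc.
        unfold Rdiv. apply is_lim_seq_mult'. apply is_lim_seq_minus'. apply is_lim_seq_const.
        exact HxS. apply is_lim_seq_const.
      - apply toeplitz; assumption. }
    apply is_lim_seq_Reals in HPl.
    destruct (HPl 1 ltac:(lra)) as [M0 HM0].
    assert (Hs : G xe + G xo = 0).
    { apply (div_contra (fun i => ye i + yo i) uo (G xe + G xo)
         (Rabs ((x 0%nat - xe) / c + G xe * Wl) + 1) (U 1%nat) M0).
      - apply is_lim_seq_plus'; assumption.
      - intro j. unfold uo. split. apply HU0; lia. apply U_le_U1; auto; lia.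
      - intro T.
        destruct (INR_archimed 1 (exp (2 * T / kap)) ltac:(lra)) as [n Hn].
        rewrite Rmult_1_r in Hn.
        exists (Nat.max M0 n). split. lia.
        eapply Rlt_le_trans; [| apply (sum_Rle (fun j => kap / 2 * / (INR j + 1)))].
        + replace (sum_f_R0 (fun j => kap / 2 * / (INR j + 1)) (Nat.max M0 n)) with
            (kap / 2 * sum_f_R0 (fun j => / (INR j + 1)) (Nat.max M0 n))
            by (rewrite scal_sum; apply sum_eq; intros; ring).
          pose proof (harmonic_ln (Nat.max M0 n)).
          assert (INR n <= INR (Nat.max M0 n)) by (apply le_INR; lia).
          assert (0 < exp (2 * T / kap)) by apply exp_pos.
          assert (2 * T / kap < ln (INR (Nat.max M0 n) + 2)).
          { rewrite <- (ln_exp (2 * T / kap)). apply ln_increasing. lra. lra. }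
          assert (T = kap / 2 * (2 * T / kap)) by (field; lra).
          assert (kap / 2 * (2 * T / kap) < kap / 2 * ln (INR (Nat.max M0 n) + 2)) by (apply Rmult_lt_compat_l; lra).
          assert (kap / 2 * ln (INR (Nat.max M0 n) + 2) <= kap / 2 * sum_f_R0 (fun j => / (INR j + 1)) (Nat.max M0 n)) by (apply Rmult_le_compat_l; lra).
          lra.
        + intros j _. unfold uo. eapply Rle_trans; [| apply HUk; lia].
          assert (E : INR (2 * j + 1) = 2 * INR j + 1) by (rewrite plus_INR, mult_INR; simpl; ring).
          rewrite E. pose proof (pos_INR j).
          replace (kap / 2 * / (INR j + 1)) with (kap * / (2 * (INR j + 1))) by (field; lra).
          unfold Rdiv. apply Rmult_le_compat_l. lra.
          apply Rinv_le_contravar; lra.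
      - intros m Hm. specialize (HM0 m Hm). unfold R_dist in HM0. fold (P m).
        pose proof (Rabs_triang_inv (P m) ((x 0%nat - xe) / c + G xe * Wl)). lra. }
    lra.
  -
    assert (HxS : is_lim_seq (fun m => x (Datatypes.S (2 * m + 1))) xe).
    { apply is_lim_seq_incr_1 in Hxe. eapply is_lim_seq_ext; [|exact Hxe].
      intro n. simpl. f_equal. lia. }
    assert (HxO : is_lim_seq (fun m => x (Datatypes.S (2 * m))) xo).
    { eapply is_lim_seq_ext; [|exact Hxo]. intro n. cbv beta. f_equal. lia. }
    assert (L1 : is_lim_seq (fun m => x (Datatypes.S (2 * m + 1)) - x (Datatypes.S (2 * m))) (xe - xo))
      by (apply is_lim_seq_minus'; assumption).
    assert (L2 : is_lim_seq (fun m => x (Datatypes.S (2 * m + 1)) - x (Datatypes.S (2 * m)))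
        (c * (G xe * Wl + (G xo * (U 1%nat - 0 - Wl) - G xo * U 1%nat)))).
    { apply is_lim_seq_ext with (fun m => c * (conv ye wo m + (conv yo we m - yo m * U 1%nat))).
      intro m. rewrite <- HD, !Hx'. ring.
      apply lim_scal. apply is_lim_seq_plus'.
      apply toeplitz; assumption.
      apply is_lim_seq_minus'. apply toeplitz; assumption.
      apply is_lim_seq_mult'. exact Hyo. apply is_lim_seq_const. }
    apply is_lim_seq_unique in L1. apply is_lim_seq_unique in L2.
    rewrite L1 in L2. injection L2 as L2.
    replace (c * Wl * (G xo - G xe)) with (- (c * (G xe * Wl + (G xo * (U 1%nat - 0 - Wl) - G xo * U 1%nat)))) by ring.
    lra.
Qed.






Lemma INR_ge1 n : (1 <= n)%nat -> 1 <= INR n.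
Proof. intro H. replace 1 with (INR 1) by reflexivity. apply le_INR. exact H. Qed.

Lemma lim_ln_bound (u : nat -> R) (C beta : R) :
  0 < beta -> 0 <= C ->
  (forall n, (1 <= n)%nat -> 0 <= u n /\ u n * (1 + beta * ln (INR n)) <= C) ->
  is_lim_seq u 0.
Proof.
  intros Hb HC Hu. apply is_lim_seq_Reals. intros eps Heps.
  destruct (INR_archimed 1 (exp (C / (beta * eps))) ltac:(lra)) as [N HN].
  rewrite Rmult_1_r in HN.
  exists (S N). intros n Hn. unfold R_dist. rewrite Rminus_0_r.
  destruct (Hu n ltac:(lia)) as [H0 H1].
  rewrite Rabs_pos_eq by lra.
  assert (HNn : INR N < INR n) by (apply lt_INR; lia).
  assert (Hexp : 0 < exp (C / (beta * eps))) by apply exp_pos.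
  assert (Hl : C / (beta * eps) < ln (INR n)).
  { rewrite <- (ln_exp (C / (beta * eps))). apply ln_increasing; lra. }
  assert (HC2 : C < eps * (beta * ln (INR n))).
  { replace C with (eps * (beta * (C / (beta * eps)))) at 1 by (field; lra).
    apply Rmult_lt_compat_l; [lra|]. apply Rmult_lt_compat_l; lra. }
  assert (Hln : 0 <= ln (INR n)) by (apply ln_ge0, INR_ge1; lia).
  assert (Hd : 0 < 1 + beta * ln (INR n)) by nra.
  assert (u n * (1 + beta * ln (INR n)) < eps * (1 + beta * ln (INR n))) by nra.
  apply Rmult_lt_reg_r with (1 + beta * ln (INR n)); lra.
Qed.

Lemma frac_props (alpha : R) (U : nat -> R) :
  0 < alpha < 1 -> (forall n, (1 <= n)%nat -> U n = U_frac alpha n) ->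
  (forall n, (1 <= n)%nat -> 0 <= U n) /\
  (forall n, (1 <= n)%nat -> U (S n) <= U n) /\
  is_lim_seq U 0 /\
  (forall n, (1 <= n)%nat -> alpha / INR n <= U n).
Proof.
  intros Ha HU. unfold U_frac, Rpower in HU.
  split; [|split; [|split]].
  - intros n Hn. rewrite HU by exact Hn. left; apply exp_pos.
  - intros n Hn. rewrite !HU by lia. apply exp_le'.
    apply Rmult_le_compat_neg_l. lra. apply ln_le'. pose proof (INR_ge1 n Hn); lra.
    apply le_INR; lia.
  - apply (lim_ln_bound U 1 (1 - alpha)); try lra.
    intros n Hn. rewrite HU by exact Hn. split. left; apply exp_pos.
    assert (Hln : 0 <= ln (INR n)) by (apply ln_ge0, INR_ge1; lia).
    pose proof (exp_ineq1_le ((1 - alpha) * ln (INR n))).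
    replace ((alpha - 1) * ln (INR n)) with (- ((1 - alpha) * ln (INR n))) by ring.
    rewrite exp_Ropp.
    pose proof (exp_pos ((1 - alpha) * ln (INR n))).
    apply Rmult_le_reg_l with (exp ((1 - alpha) * ln (INR n))). lra.
    rewrite <- Rmult_assoc, Rinv_r by lra. lra.
  - intros n Hn. rewrite HU by exact Hn.
    pose proof (INR_ge1 n Hn).
    assert (Hln : 0 <= ln (INR n)) by (apply ln_ge0; lra).
    apply Rle_trans with (exp (- ln (INR n))).
    + rewrite exp_Ropp, exp_ln by lra. unfold Rdiv.
      rewrite <- (Rmult_1_l (/ INR n)) at 2. apply Rmult_le_compat_r.
      left; apply Rinv_0_lt_compat; lra. lra.
    + apply exp_le'. nra.
Qed.

Lemma rec_props (alpha : R) (U : nat -> R) :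
  0 < alpha < 1 -> 0 < U 1%nat ->
  (forall n, (1 <= n)%nat -> U (S n) = U n * (INR n + alpha - 1) / INR n) ->
  (forall n, (1 <= n)%nat -> 0 <= U n) /\
  (forall n, (1 <= n)%nat -> U (S n) <= U n) /\
  is_lim_seq U 0 /\
  (forall n, (1 <= n)%nat -> U 1%nat * alpha / INR n <= U n).
Proof.
  intros Ha HU1 HR.
  assert (Hpos : forall n, (1 <= n)%nat -> 0 < U n).
  { intros n Hn. induction n as [|n IH]; [lia|].
    destruct (Nat.eq_dec n 0) as [->|Hne]; [exact HU1|].
    rewrite (HR n) by lia. pose proof (INR_ge1 n ltac:(lia)).
    specialize (IH ltac:(lia)). unfold Rdiv.
    apply Rmult_lt_0_compat. apply Rmult_lt_0_compat; lra. apply Rinv_0_lt_compat; lra. }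
  split; [|split; [|split]].
  - intros n Hn. left. apply Hpos, Hn.
  - intros n Hn. rewrite HR by exact Hn. pose proof (INR_ge1 n Hn). pose proof (Hpos n Hn).
    apply Rmult_le_reg_r with (INR n). lra. unfold Rdiv. rewrite Rmult_assoc, Rinv_l by lra. nra.
  - apply (lim_ln_bound U (U 1%nat) (1 - alpha)); try lra.
    intros n Hn. split. left; apply Hpos, Hn.
    induction n as [|n IH]; [lia|].
    destruct (Nat.eq_dec n 0) as [->|Hne].
    + change (INR 1) with 1. rewrite ln_1. lra.
    + specialize (IH ltac:(lia)). rewrite (HR n) by lia.
      pose proof (INR_ge1 n ltac:(lia)). pose proof (Hpos n ltac:(lia)).
      assert (Hln : 0 <= ln (INR n)) by (apply ln_ge0; lra).
      assert (Hl2 : ln (INR (S n)) <= ln (INR n) + / INR n).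
      { rewrite S_INR. replace (INR n + 1) with (INR n * (1 + / INR n)) by (field; lra).
        rewrite ln_mult. apply Rplus_le_compat_l. apply ln_1p_le.
        assert (0 < / INR n) by (apply Rinv_0_lt_compat; lra). lra. lra.
        assert (0 < / INR n) by (apply Rinv_0_lt_compat; lra). lra. }
      set (A := 1 + (1 - alpha) * ln (INR n)) in *.
      assert (HA : 1 <= A) by (unfold A; nra).
      assert (Hk : (INR n + alpha - 1) / INR n * (1 + (1 - alpha) * ln (INR (S n))) <= A).
      { replace ((INR n + alpha - 1) / INR n) with (1 - (1 - alpha) / INR n) by (field; lra).
        assert (0 <= 1 - (1 - alpha) / INR n).
        { unfold Rdiv. assert ((1 - alpha) * / INR n <= 1 * / INR n) by (apply Rmult_le_compat_r; [left; apply Rinv_0_lt_compat; lra| lra]).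
          assert (/ INR n <= 1) by (rewrite <- Rinv_1; apply Rinv_le_contravar; lra). lra. }
        apply Rle_trans with ((1 - (1 - alpha) / INR n) * (A + (1 - alpha) / INR n)).
        - apply Rmult_le_compat_l. lra. unfold A. unfold Rdiv. nra.
        - assert (0 <= (1 - alpha) / INR n) by (unfold Rdiv; apply Rmult_le_pos; [lra| left; apply Rinv_0_lt_compat; lra]).
          nra. }
      replace (U n * (INR n + alpha - 1) / INR n * (1 + (1 - alpha) * ln (INR (S n)))) with
        (U n * ((INR n + alpha - 1) / INR n * (1 + (1 - alpha) * ln (INR (S n))))) by (field; lra).
      apply Rle_trans with (U n * A). apply Rmult_le_compat_l. lra. exact Hk. exact IH.
  - assert (Hk : forall n, (1 <= n)%nat -> U 1%nat * alpha <= U n * (INR n - 1 + alpha)).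
    { intros n Hn. induction n as [|n IH]; [lia|].
      destruct (Nat.eq_dec n 0) as [->|Hne].
      + simpl. lra.
      + specialize (IH ltac:(lia)). rewrite (HR n) by lia. rewrite S_INR.
        pose proof (INR_ge1 n ltac:(lia)). pose proof (Hpos n ltac:(lia)).
        replace (U n * (INR n + alpha - 1) / INR n * (INR n + 1 - 1 + alpha)) with
          (U n * (INR n - 1 + alpha) * ((INR n + alpha) / INR n)) by (field; lra).
        apply Rle_trans with (U n * (INR n - 1 + alpha) * 1). lra.
        apply Rmult_le_compat_l. nra.
        apply Rmult_le_reg_r with (INR n). lra. unfold Rdiv. rewrite Rmult_assoc, Rinv_l by lra. lra. }
    intros n Hn. specialize (Hk n Hn). pose proof (INR_ge1 n Hn). pose proof (Hpos n Hn).
    apply Rmult_le_reg_r with (INR n). lra. unfold Rdiv. rewrite Rmult_assoc, Rinv_l by lra. nra.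
Qed.

Lemma ball_R (x e y : R) : ball x e y <-> Rabs (y - x) < e.
Proof. split; intro H; exact H. Qed.

Lemma is_derive_rpow y t : 0 < t -> is_derive (fun s => Rpower s y) t (y * Rpower t (y - 1)).
Proof. intro H. apply is_derive_Reals, derivable_pt_lim_power; auto. Qed.

Lemma is_derive_expm t : is_derive (fun s => exp (- s)) t (- exp (- t)).
Proof. auto_derive; auto; ring. Qed.

Definition gf (x : R) (t : R) : R := Rpower t (x - 1) * exp (- t).

Lemma is_derive_prod (f g : R -> R) t df dg :
  is_derive f t df -> is_derive g t dg -> is_derive (fun s => f s * g s) t (df * g t + f t * dg).
Proof. intros Hf Hg. apply (is_derive_mult f g t df dg Hf Hg). intros; apply Rmult_comm. Qed.

Lemma gf_derive x t : 0 < t -> ex_derive (gf x) t.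
Proof.
  intro H. eexists. unfold gf. apply is_derive_prod. apply is_derive_rpow; auto. apply is_derive_expm.
Qed.

Lemma gf_cont x t : 0 < t -> continuous (gf x) t.
Proof. intro H. apply (@ex_derive_continuous R_AbsRing R_NormedModule), gf_derive, H. Qed.

Lemma gf_pos x t : 0 < gf x t.
Proof. unfold gf, Rpower. apply Rmult_lt_0_compat; apply exp_pos. Qed.

Lemma gf_exRInt x a b : 0 < a -> 0 < b -> ex_RInt (gf x) a b.
Proof.
  intros Ha Hb. apply (@ex_RInt_continuous R_CompleteNormedModule). intros z Hz. apply gf_cont.
  pose proof (Rmin_glb_lt a b 0). unfold Rmin in *. destruct (Rle_dec a b); lra.
Qed.

Lemma gf_mono x a a' b' b : 0 < a -> a <= a' -> a' <= b' -> b' <= b ->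
  RInt (gf x) a' b' <= RInt (gf x) a b.
Proof.
  intros Ha H1 H2 H3.
  rewrite <- (RInt_Chasles (gf x) a a' b) by (apply gf_exRInt; lra).
  rewrite <- (RInt_Chasles (gf x) a' b' b) by (apply gf_exRInt; lra).
  assert (0 <= RInt (gf x) a a') by (apply RInt_ge_0; [lra| apply gf_exRInt; lra| intros; left; apply gf_pos]).
  assert (0 <= RInt (gf x) b' b) by (apply RInt_ge_0; [lra| apply gf_exRInt; lra| intros; left; apply gf_pos]).
  change plus with Rplus. lra.
Qed.




Lemma exp_le1 x : x <= 0 -> exp x <= 1.
Proof. intro H. rewrite <- exp_0. apply exp_le'. exact H. Qed.

Lemma rpow_cont y t : 0 < t -> continuous (fun s => Rpower s y) t.
Proof. intro H. apply (@ex_derive_continuous R_AbsRing R_NormedModule). eexists. apply is_derive_rpow, H. Qed.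

Lemma int_pow x a : 0 < x -> 0 < a <= 1 ->
  RInt (fun t => Rpower t (x - 1)) a 1 = (Rpower 1 x - Rpower a x) / x.
Proof.
  intros Hx Ha. apply is_RInt_unique.
  assert (H := @is_RInt_derive R_CompleteNormedModule (fun t => / x * Rpower t x) (fun t => Rpower t (x - 1)) a 1).
  replace ((Rpower 1 x - Rpower a x) / x) with (/ x * Rpower 1 x - / x * Rpower a x) by (field; lra).
  apply H.
  - intros t Ht. rewrite Rmin_left, Rmax_right in Ht by lra.
    replace (Rpower t (x - 1)) with (0 * Rpower t x + / x * (x * Rpower t (x - 1))) by (field; lra).
    apply (is_derive_prod (fun _ => / x) (fun s => Rpower s x)). auto_derive; auto. apply is_derive_rpow; lra.
  - intros t Ht. rewrite Rmin_left, Rmax_right in Ht by lra. apply rpow_cont; lra.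
Qed.

Lemma int_exp b : 1 <= b -> RInt (fun t => exp (- t)) 1 b = exp (- 1) - exp (- b).
Proof.
  intros Hb. apply is_RInt_unique.
  assert (H := @is_RInt_derive R_CompleteNormedModule (fun t => - exp (- t)) (fun t => exp (- t)) 1 b).
  replace (exp (- 1) - exp (- b)) with (- exp (- b) - - exp (- 1)) by ring.
  apply H.
  - intros t Ht. auto_derive; auto; ring.
  - intros t Ht. apply (@ex_derive_continuous R_AbsRing R_NormedModule). auto_derive. auto.
Qed.

Lemma J_bound x a b : 0 < x <= 1 -> 0 < a <= 1 -> 1 <= b -> RInt (gf x) a b <= / x + 1.
Proof.
  intros Hx Ha Hb.
  rewrite <- (RInt_Chasles (gf x) a 1 b) by (apply gf_exRInt; lra).
  change plus with Rplus.
  assert (H1 : RInt (gf x) a 1 <= RInt (fun t => Rpower t (x - 1)) a 1).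
  { apply RInt_le. lra. apply gf_exRInt; lra.
    apply (@ex_RInt_continuous R_CompleteNormedModule). intros z Hz.
    rewrite Rmin_left, Rmax_right in Hz by lra. apply rpow_cont; lra.
    intros t Ht. unfold gf. 
    assert (0 < Rpower t (x - 1)) by (unfold Rpower; apply exp_pos).
    assert (exp (- t) <= 1) by (apply exp_le1; lra). nra. }
  assert (H2 : RInt (gf x) 1 b <= RInt (fun t => exp (- t)) 1 b).
  { apply RInt_le. lra. apply gf_exRInt; lra.
    apply (@ex_RInt_continuous R_CompleteNormedModule). intros z Hz.
    apply (@ex_derive_continuous R_AbsRing R_NormedModule). auto_derive. auto.
    intros t Ht. unfold gf.
    assert (Rpower t (x - 1) <= 1).
    { unfold Rpower. apply exp_le1.
      assert (0 <= ln t) by (apply ln_ge0; lra). nra. }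
    pose proof (exp_pos (- t)). nra. }
  rewrite int_pow in H1 by lra. rewrite int_exp in H2 by lra.
  assert (0 < Rpower a x) by (unfold Rpower; apply exp_pos).
  replace (Rpower 1 x) with 1 in H1 by (unfold Rpower; rewrite ln_1, Rmult_0_r, exp_0; reflexivity).
  assert ((1 - Rpower a x) / x <= / x).
  { unfold Rdiv. rewrite <- (Rmult_1_l (/ x)) at 2. apply Rmult_le_compat_r.
    left; apply Rinv_0_lt_compat; lra. lra. }
  assert (exp (- 1) <= 1) by (apply exp_le1; lra).
  pose proof (exp_pos (- b)).
  lra.
Qed.

Definition GamIs (x l : R) := is_RInt_gen (gf x) (at_right 0) (Rbar_locally p_infty) l.

Lemma gamma_exists x : 0 < x <= 1 -> exists l, 0 < l /\ GamIs x l.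
Proof.
  intro Hx.
  set (J := fun n => RInt (gf x) (/ (INR n + 1)) (INR n + 1)).
  assert (Hab : forall n, 0 < / (INR n + 1) <= 1 /\ 1 <= INR n + 1).
  { intro n. pose proof (pos_INR n). split; [split|]; try lra.
    apply Rinv_0_lt_compat; lra. rewrite <- Rinv_1. apply Rinv_le_contravar; lra. }
  assert (Jinc : forall n, J n <= J (S n)).
  { intro n. unfold J. destruct (Hab n) as [[A1 A2] A3]. destruct (Hab (S n)) as [[B1 B2] B3].
    rewrite S_INR in *. pose proof (pos_INR n).
    apply gf_mono; try lra. apply Rinv_le_contravar; lra. }
  assert (Jbd : forall n, J n <= / x + 1).
  { intro n. destruct (Hab n) as [[A1 A2] A3]. apply J_bound; lra. }
  destruct (ex_finite_lim_seq_incr J (/ x + 1) Jinc Jbd) as [l HJ].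
  assert (Hle := is_lim_seq_incr_compare J l HJ Jinc).
  exists l. split.
  - apply Rlt_le_trans with (J 1%nat); [|apply Hle].
    unfold J. apply RInt_gt_0.
    + simpl. lra.
    + intros; apply gf_pos.
    + intros t Ht. apply gf_cont. simpl in Ht. lra.
  - unfold GamIs, is_RInt_gen, filterlimi, filter_le, filtermapi.
    intros P [eps HP].
    apply is_lim_seq_Reals in HJ.
    destruct (HJ eps (cond_pos eps)) as [N HN].
    destruct (Hab N) as [[A1 A2] A3].
    apply (Filter_prod _ _ _ (fun a => 0 < a < / (INR N + 1)) (fun b => INR N + 1 < b)).
    + unfold at_right, within, locally. exists (mkposreal _ A1).
      intros y Hy Hy0. assert (Hy2 : Rabs (y - 0) < / (INR N + 1)) by exact Hy.
      rewrite Rminus_0_r, Rabs_pos_eq in Hy2 by lra. lra.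
    + simpl. exists (INR N + 1). auto.
    + intros a b [Ha1 Ha2] Hb. simpl.
      exists (RInt (gf x) a b). split.
      * apply (@RInt_correct R_CompleteNormedModule), gf_exRInt; lra.
      * apply HP. apply ball_R.
        assert (L1 : J N <= RInt (gf x) a b) by (unfold J; apply gf_mono; lra).
        destruct (INR_archimed 1 (b + / a) ltac:(lra)) as [M HM]. rewrite Rmult_1_r in HM.
        assert (Hia : 0 < / a) by (apply Rinv_0_lt_compat; lra).
        assert (L2 : RInt (gf x) a b <= J M).
        { unfold J. destruct (Hab M) as [[B1 B2] B3]. apply gf_mono; try lra.
          replace a with (/ / a) by (field; lra). apply Rinv_le_contravar; lra. }
        pose proof (Hle N) as HleN. specialize (Hle M). specialize (HN N (le_n N)). unfold R_dist in HN.
        rewrite Rabs_minus_sym, Rabs_pos_eq in HN by lra.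
        rewrite Rabs_minus_sym, Rabs_pos_eq by lra. lra.
Qed.

Lemma gf_cont_pt x t : 0 < t -> continuity_pt (gf x) t.
Proof. intro H. apply continuity_pt_filterlim. apply gf_cont, H. Qed.

Lemma gamma_step x l : 0 < x -> GamIs x l -> GamIs (x + 1) (x * l).
Proof.
  intros Hx Hl.
  set (g := fun t => - (Rpower t x * exp (- t))).
  set (dg := fun t => gf (x + 1) t - x * gf x t).
  assert (Hd : forall t, 0 < t -> is_derive g t (dg t)).
  { intros t Ht. unfold g, dg, gf. replace (x + 1 - 1) with x by ring.
    replace (Rpower t x * exp (- t) - x * (Rpower t (x - 1) * exp (- t))) with
      (- ((x * Rpower t (x - 1)) * exp (- t) + Rpower t x * (- exp (- t)))) by ring.
    apply (is_derive_opp (fun t => Rpower t x * exp (- t))).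
    apply (is_derive_prod (fun s => Rpower s x) (fun s => exp (- s))).
    apply is_derive_rpow; auto. apply is_derive_expm. }
  assert (HD : forall t, 0 < t -> Derive g t = dg t) by (intros; apply is_derive_unique, Hd; auto).
  assert (HP : filter_prod (at_right 0) (Rbar_locally p_infty)
     (fun ab => forall t, Rmin (fst ab) (snd ab) <= t <= Rmax (fst ab) (snd ab) -> 0 < t)).
  { apply (Filter_prod _ _ _ (fun a => 0 < a) (fun b => 0 < b)).
    - unfold at_right, within, locally. exists (mkposreal 1 Rlt_0_1). intros; auto.
    - simpl. exists 0. auto.
    - intros a b Ha Hb t Ht. simpl in Ht. pose proof (Rmin_glb_lt a b 0 Ha Hb). lra. }
  assert (HI := is_RInt_gen_Derive (Fa := at_right 0) (Fb := Rbar_locally p_infty) g 0 0).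
  assert (HI2 : is_RInt_gen (Derive g) (at_right 0) (Rbar_locally p_infty) (0 - 0)).
  { apply HI.
    - eapply filter_imp; [|exact HP]. intros [a b] H t Ht. exists (dg t). apply Hd, (H t Ht).
    - eapply filter_imp; [|exact HP]. intros [a b] H t Ht. specialize (H t Ht).
      apply (continuous_ext_loc _ dg).
      + exists (mkposreal t H). intros s Hs. 
        assert (Hs2 : Rabs (s - t) < t) by exact Hs.
        symmetry. apply HD. apply Rabs_def2 in Hs2. lra.
      + apply continuity_pt_filterlim. unfold dg.
        apply (continuity_pt_minus (gf (x + 1)) (fun s => x * gf x s)).
        apply gf_cont_pt; auto.
        apply (continuity_pt_mult (fun _ => x) (gf x)).
        apply continuity_pt_const. intros u v; reflexivity.
        apply gf_cont_pt; auto.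
    - apply filterlim_locally. intro eps.
      set (d := exp (ln eps / x)).
      assert (Hdpos : 0 < d) by apply exp_pos.
      unfold at_right, within, locally. exists (mkposreal d Hdpos). intros a Ha Ha0.
      assert (Ha2 : Rabs (a - 0) < d) by exact Ha.
      rewrite Rminus_0_r, Rabs_pos_eq in Ha2 by lra.
      apply ball_R. unfold g. rewrite Rminus_0_r, Rabs_Ropp.
      assert (Hl1 : ln a < ln eps / x) by (rewrite <- (ln_exp (ln eps / x)); apply ln_increasing; auto).
      assert (Hl2 : x * ln a < ln eps).
      { apply Rmult_lt_compat_l with (r := x) in Hl1; auto.
        replace (x * (ln eps / x)) with (ln eps) in Hl1 by (field; lra). exact Hl1. }
      unfold Rpower. rewrite Rabs_pos_eq by (left; apply Rmult_lt_0_compat; apply exp_pos).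
      assert (exp (x * ln a) < eps) by (rewrite <- (exp_ln eps) by (apply cond_pos); apply exp_increasing; auto).
      assert (exp (- a) <= 1) by (apply exp_le1; lra).
      pose proof (exp_pos (x * ln a)). pose proof (exp_pos (- a)). nra.
    - apply filterlim_locally. intro eps.
      pose proof is_lim_div_ln_p as Hlim. unfold is_lim in Hlim.
      assert (Hq : 0 < / (2 * x)) by (apply Rinv_0_lt_compat; lra).
      specialize (Hlim (fun v => Rabs (v - 0) < / (2 * x))).
      destruct Hlim as [M HM].
      { simpl. exists (mkposreal _ Hq). intros v Hv. exact Hv. }
      simpl. exists (Rmax (Rmax M 1) (- 2 * ln eps)). intros b Hb.
      assert (HbM : M < b) by (eapply Rle_lt_trans; [|exact Hb]; eapply Rle_trans; [apply Rmax_l| apply Rmax_l]).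
      assert (Hb1 : 1 < b) by (eapply Rle_lt_trans; [|exact Hb]; eapply Rle_trans; [apply Rmax_r| apply Rmax_l]).
      assert (Hbe : - 2 * ln eps < b) by (eapply Rle_lt_trans; [|exact Hb]; apply Rmax_r).
      specialize (HM b HbM). rewrite Rminus_0_r in HM.
      apply Rabs_def2 in HM. destruct HM as [HM _].
      assert (Hx2 : x * ln b < b / 2).
      { apply Rmult_lt_compat_r with (r := b) in HM; [|lra].
        unfold Rdiv in HM. rewrite Rmult_assoc, Rinv_l, Rmult_1_r in HM by lra.
        apply Rmult_lt_compat_l with (r := x) in HM; [|lra].
        replace (x * (/ (2 * x) * b)) with (b / 2) in HM by (field; lra). exact HM. }
      apply ball_R. unfold g. rewrite Rminus_0_r, Rabs_Ropp. unfold Rpower.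
      rewrite <- exp_plus. rewrite Rabs_pos_eq by (left; apply exp_pos).
      rewrite <- (exp_ln eps) by (apply cond_pos). apply exp_increasing. lra. }
  assert (HS := is_RInt_gen_scal (Fa := at_right 0) (Fb := Rbar_locally p_infty) (gf x) x l Hl).
  assert (HSum := is_RInt_gen_plus _ _ _ _ HS HI2).
  unfold GamIs.
  replace (x * l) with (plus (scal x l) (0 - 0)) by (unfold plus, scal; simpl; unfold mult; simpl; ring).
  eapply is_RInt_gen_ext; [| exact HSum].
  eapply filter_imp; [|exact HP]. intros [a b] H t Ht. simpl in Ht.
  assert (Ht0 : 0 < t) by (apply (H t); simpl; lra).
  rewrite HD by exact Ht0. unfold dg. unfold plus, scal; simpl; unfold mult; simpl. ring.
Qed.

Lemma Gamma_eq x l : GamIs x l -> Gamma x = l.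
Proof.
  intro H. unfold Gamma.
  apply (@is_RInt_gen_unique R_CompleteNormedModule (at_right 0) (Rbar_locally p_infty)
          (Proper_StrongProper _ (at_right_proper_filter 0))
          (Proper_StrongProper _ (Rbar_locally_filter p_infty))).
  exact H.
Qed.

Lemma gam_seq (a : R) : 0 < a <= 1 -> forall k, exists l, 0 < l /\ GamIs (INR k + a) l.
Proof.
  intros Ha k. induction k as [|k [l [Hl HG]]].
  - destruct (gamma_exists a Ha) as [l [Hl HG]]. exists l. split; auto.
    simpl. rewrite Rplus_0_l. exact HG.
  - exists ((INR k + a) * l). split.
    + apply Rmult_lt_0_compat; auto. pose proof (pos_INR k); lra.
    + rewrite S_INR. replace (INR k + 1 + a) with (INR k + a + 1) by ring.
      apply gamma_step; auto. pose proof (pos_INR k); lra.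
Qed.

Lemma gam_rec (a : R) : 0 < a <= 1 -> forall k,
  0 < Gamma (INR k + a) /\ Gamma (INR (S k) + a) = (INR k + a) * Gamma (INR k + a).
Proof.
  intros Ha k. destruct (gam_seq a Ha k) as [l [Hl HG]].
  rewrite (Gamma_eq _ _ HG). split; auto.
  apply Gamma_eq. rewrite S_INR. replace (INR k + 1 + a) with (INR k + a + 1) by ring.
  apply gamma_step; auto. pose proof (pos_INR k); lra.
Qed.

Lemma diff_rec (alpha : R) (U : nat -> R) :
  0 < alpha < 1 -> (forall n, (1 <= n)%nat -> U n = U_diff alpha n) ->
  0 < U 1%nat /\ (forall n, (1 <= n)%nat -> U (S n) = U n * (INR n + alpha - 1) / INR n).
Proof.
  intros Ha HU.
  assert (HA := gam_rec alpha ltac:(lra)).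
  assert (HB := gam_rec 1 ltac:(lra)).
  assert (HUk : forall k, U (S k) = Gamma (INR k + alpha) / Gamma (INR k + 1)).
  { intro k. rewrite HU by lia. unfold U_diff. rewrite S_INR. f_equal; f_equal; ring. }
  split.
  - rewrite (HUk O). destruct (HA O) as [H1 _]. destruct (HB O) as [H2 _].
    apply Rdiv_lt_0_compat; auto.
  - intros n Hn. destruct n as [|k]; [lia|].
    rewrite !HUk. destruct (HA k) as [A1 A2]. destruct (HB k) as [B1 B2].
    rewrite A2, B2. rewrite S_INR. pose proof (pos_INR k).
    field. split; lra.
Qed.

Theorem mainTheorem1 (alpha h : R) (G : R -> R) (U : nat -> R) (x : nat -> R)
  (xo xe : R) :
  0 < alpha < 1 ->
  0 < h ->
  (forall y, continuous G y) ->
  ((forall n, (1 <= n)%nat -> U n = U_frac alpha n) \/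
   (forall n, (1 <= n)%nat -> U n = U_diff alpha n)) ->
  (forall n, x (S n) = x 0%nat - Rpower h alpha / Gamma alpha *
       sum_f_R0 (fun k => G (x k) * U (n - k + 1)%nat) n) ->
  is_lim_seq (fun n => x (2 * n + 1)%nat) xo ->
  is_lim_seq (fun n => x (2 * n)%nat) xe ->
  G xo + G xe = 0 /\
  xo - xe = W_alpha U / Gamma alpha * Rpower h alpha * (G xo - G xe).
Proof.
  intros Ha Hh HG HU Hx Hxo Hxe.
  assert (HGa : 0 < Gamma alpha).
  { destruct (gam_rec alpha ltac:(lra) O) as [H _]. simpl in H. rewrite Rplus_0_l in H. exact H. }
  assert (Hc : Rpower h alpha / Gamma alpha <> 0).
  { apply Rgt_not_eq. apply Rdiv_lt_0_compat; auto. unfold Rpower; apply exp_pos. }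
  assert (Hprops : exists kap, 0 < kap /\
    (forall n, (1 <= n)%nat -> 0 <= U n) /\
    (forall n, (1 <= n)%nat -> U (S n) <= U n) /\
    is_lim_seq U 0 /\
    (forall n, (1 <= n)%nat -> kap / INR n <= U n)).
  { destruct HU as [HU|HU].
    - exists alpha. split. lra. apply frac_props; auto.
    - destruct (diff_rec alpha U Ha HU) as [HU1 HR].
      exists (U 1%nat * alpha). split. apply Rmult_lt_0_compat; lra.
      apply rec_props; auto. }
  destruct Hprops as [kap [Hk [H1 [H2 [H3 H4]]]]].
  destruct (abstract_main (Rpower h alpha / Gamma alpha) U G x xo xe kap HG H1 H2 H3 Hk H4 Hx Hxo Hxe)
    as [P1 P2].
  split. apply P1, Hc.
  unfold W_alpha. rewrite P2. unfold Rdiv. ring.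
Qed.
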